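(* Let $x_s<x_t$ be integers, let $C\ge 0$, and let $f:[x_s,x_t]\to\mathbb{R}$ be such that $([x_s,x_t],f)$ is an Ameso($C$) pair. Suppose there exist $x^0\in[x_s,x_t]$ and positive integers $b_1,b_2$ with $[x^0-b_2,x^0+b_1]\subseteq[x_s,x_t]$ such that $f(x^0)=\min_{y\in[x^0-b_2,x^0+b_1]}f(y)$, $f(x^0)+C\le\max_{y\in[x^0,x^0+b_1]}f(y)$, and $f(x^0)+C\le\max_{y\in[x^0-b_2,x^0]}f(y)$. Then $f(x^0)=\min_{y\in[x_s,x_t]}f(y)$.
   Context: For integers $a\le b$, $[a,b]$ denotes the set of integers $\{a,a+1,\dots,b\}$. Floors and ceilings of vectors are taken componentwise. A set $D^n\subseteq\mathbb{Z}^n$ is an Ameso set if $\lceil(\vec x+\vec y)/2\rceil,\lfloor(\vec x+\vec y)/2\rfloor\in D^n$ for all $\vec x,\vec y\in D^n$. For $C\ge 0$, $(D^n,f)$ is an Ameso($C$) pair if $D^n$ is an Ameso set, $f:D^n\to\mathbb{R}$ is bounded below, and $f(\vec x)+f(\vec y)+C\ge f(\lceil(\vec x+\vec y)/2\rceil)+f(\lfloor(\vec x+\vec y)/2\rfloor)$ for all $\vec x,\vec y\in D^n$. *)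

(* Defs.v *)
From Stdlib Require Import ZArith Reals.
Open Scope Z_scope.

Definition zfloor_mid (x y : Z) : Z := Z.div (x + y) 2.
Definition zceil_mid (x y : Z) : Z := - Z.div (- (x + y)) 2.

Definition zint (a b : Z) (x : Z) : Prop := a <= x <= b.

Definition ameso_set (D : Z -> Prop) : Prop :=
  forall x y, D x -> D y -> D (zceil_mid x y) /\ D (zfloor_mid x y).

(* (D, f) is an Ameso(C) pair; f is given on all of Z but only its values
   on D matter. *)
Definition ameso_pair (C : R) (D : Z -> Prop) (f : Z -> R) : Prop :=
  ameso_set D /\
  (exists m : R, forall x, D x -> (m <= f x)%R) /\
  (forall x y, D x -> D y ->
     (f (zceil_mid x y) + f (zfloor_mid x y) <= f x + f y + C)%R).

(* Main.v *)
Require Import Defs.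
From Stdlib Require Import ZArith Reals Lra Lia.

Lemma mid_floor (u v z : Z) : (u + v = 2 * z)%Z -> zfloor_mid u v = z.
Proof.
  intro H. unfold zfloor_mid. rewrite H, Z.mul_comm. apply Z.div_mul. lia.
Qed.

Lemma mid_ceil (u v z : Z) : (u + v = 2 * z)%Z -> zceil_mid u v = z.
Proof.
  intro H. unfold zceil_mid. rewrite H.
  replace (- (2 * z))%Z with ((- z) * 2)%Z by ring.
  rewrite Z.div_mul by lia. ring.
Qed.

Lemma exists_max (f : Z -> R) (lo : Z) (n : nat) :
  exists m, (lo <= m <= lo + Z.of_nat n)%Z /\
    forall w, (lo <= w <= lo + Z.of_nat n)%Z -> (f w <= f m)%R.
Proof.
  induction n as [|n IH].
  - exists lo. split; [lia|]. intros w Hw. replace w with lo by lia. lra.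
  - destruct IH as [m [Hm Hmax]].
    destruct (Rle_dec (f m) (f (lo + Z.of_nat (S n)))%Z) as [Hle|Hgt].
    + exists (lo + Z.of_nat (S n))%Z. split; [lia|].
      intros w Hw.
      destruct (Z.eq_dec w (lo + Z.of_nat (S n))) as [->|Hne]; [lra|].
      assert (f w <= f m)%R by (apply Hmax; lia). lra.
    + exists m. split; [lia|]. intros w Hw.
      destruct (Z.eq_dec w (lo + Z.of_nat (S n))) as [->|Hne]; [lra|].
      apply Hmax; lia.
Qed.

Lemma lemL (C : R) (f : Z -> R) (x y : Z) :
  (0 <= C)%R ->
  (forall u v, (x <= u <= y)%Z -> (x <= v <= y)%Z ->
     (f (zceil_mid u v) + f (zfloor_mid u v) <= f u + f v + C)%R) ->
  (f y < f x)%R ->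
  forall z, (x < z < y)%Z -> (f z < f x + C)%R.
Proof.
  intros HC H Hy z Hz.
  destruct (exists_max f (x+1) (Z.to_nat (y - 1 - (x + 1)))) as [m [Hm Hmax]].
  rewrite Z2Nat.id in Hm, Hmax by lia.
  set (K := f m).
  assert (Hzk : (f z <= K)%R) by (apply Hmax; lia).
  destruct (Rlt_dec K (f x + C)) as [Hlt|Hge]; [lra|].
  exfalso.
  assert (Hall : forall k : nat, forall z', (x < z' < y)%Z ->
            (y - z' <= Z.of_nat k)%Z -> f z' = K -> False).
  { induction k as [|k IH]; intros z' Hz' Hk Hf; [lia|].
    destruct (Z_le_gt_dec (2 * z') (x + y)) as [Hl|Hr].
    - set (b := (2 * z' - x)%Z).
      assert (Hb := H x b ltac:(lia) ltac:(unfold b; lia)).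
      rewrite (mid_ceil x b z') in Hb by (unfold b; lia).
      rewrite (mid_floor x b z') in Hb by (unfold b; lia).
      destruct (Z.eq_dec b y) as [Heq|Hne].
      + rewrite Heq in Hb. lra.
      + assert (f b <= K)%R by (apply Hmax; unfold b in *; lia).
        apply (IH b); unfold b in *; try lia. lra.
    - set (a := (2 * z' - y)%Z).
      assert (Ha := H a y ltac:(unfold a; lia) ltac:(lia)).
      rewrite (mid_ceil a y z') in Ha by (unfold a; lia).
      rewrite (mid_floor a y z') in Ha by (unfold a; lia).
      assert (f a <= K)%R by (apply Hmax; unfold a in *; lia).
      lra. }
  apply (Hall (Z.to_nat (y - m)) m); try lia. reflexivity.
Qed.

Lemma ceil_opp (u v : Z) : zceil_mid (- u) (- v) = (- zfloor_mid u v)%Z.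
Proof. unfold zceil_mid, zfloor_mid. f_equal. f_equal. ring. Qed.

Lemma floor_opp (u v : Z) : zfloor_mid (- u) (- v) = (- zceil_mid u v)%Z.
Proof. unfold zceil_mid, zfloor_mid. rewrite Z.opp_involutive. f_equal. ring. Qed.

Lemma lemL' (C : R) (f : Z -> R) (x y : Z) :
  (0 <= C)%R ->
  (forall u v, (y <= u <= x)%Z -> (y <= v <= x)%Z ->
     (f (zceil_mid u v) + f (zfloor_mid u v) <= f u + f v + C)%R) ->
  (f y < f x)%R ->
  forall z, (y < z < x)%Z -> (f z < f x + C)%R.
Proof.
  intros HC H Hy z Hz.
  set (g := fun t => f (- t)%Z).
  assert (Hg := lemL C g (- x) (- y) HC).
  unfold g in Hg. rewrite !Z.opp_involutive in Hg.
  replace z with (- - z)%Z by ring.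
  apply Hg; [| exact Hy | lia].
  intros u v Hu Hv. rewrite <- floor_opp, <- ceil_opp.
  rewrite Rplus_comm. apply H; lia.
Qed.

Theorem theorem3 (xs xt : Z) (C : R) (f : Z -> R) :
  (xs < xt)%Z ->
  (0 <= C)%R ->
  ameso_pair C (zint xs xt) f ->
  forall (x0 b1 b2 : Z),
    zint xs xt x0 ->
    (0 < b1)%Z -> (0 < b2)%Z ->
    (forall y, zint (x0 - b2) (x0 + b1) y -> zint xs xt y) ->
    (forall y, zint (x0 - b2) (x0 + b1) y -> (f x0 <= f y)%R) ->
    (exists y, zint x0 (x0 + b1) y /\ (f x0 + C <= f y)%R) ->
    (exists y, zint (x0 - b2) x0 y /\ (f x0 + C <= f y)%R) ->
    forall y, zint xs xt y -> (f x0 <= f y)%R.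
Proof.
  unfold zint, ameso_pair.
  intros Hst HC [_ [_ Hineq]] x0 b1 b2 Hx0 Hb1 Hb2 Hwin Hmin [z1 [Hz1 Hfz1]] [z2 [Hz2 Hfz2]] y Hy.
  destruct (Rle_dec (f x0) (f y)) as [|Hlt]; [assumption|].
  apply Rnot_le_lt in Hlt. exfalso.
  destruct (Z_lt_le_dec (x0 + b1) y) as [Hr|Hr].
  - assert (HL := lemL C f x0 y HC
      ltac:(intros u v Hu Hv; apply Hineq; lia) Hlt).
    destruct (Z.eq_dec z1 x0) as [->|Hne].
    + assert (f x0 <= f (x0 + 1)%Z)%R by (apply Hmin; lia).
      assert (f (x0 + 1)%Z < f x0 + C)%R by (apply HL; lia). lra.
    + assert (f z1 < f x0 + C)%R by (apply HL; lia). lra.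
  - destruct (Z_lt_le_dec y (x0 - b2)) as [Hl|Hl].
    + assert (HL := lemL' C f x0 y HC
        ltac:(intros u v Hu Hv; apply Hineq; lia) Hlt).
      destruct (Z.eq_dec z2 x0) as [->|Hne].
      * assert (f x0 <= f (x0 - 1)%Z)%R by (apply Hmin; lia).
        assert (f (x0 - 1)%Z < f x0 + C)%R by (apply HL; lia). lra.
      * assert (f z2 < f x0 + C)%R by (apply HL; lia). lra.
    + assert (f x0 <= f y)%R by (apply Hmin; lia). lra.
Qed.
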